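(* Let $\Omega\subset\mathbb R^d$ be a bounded Borel set, $f:\Omega\to[0,\infty)$ with $\int_\Omega f=1$, $p\ge1$, $x_1,x_2\in\Omega$, and $h_1,h_2:[0,1]\to[0,\infty)$ continuous and non-decreasing, and assume $|G(s)-G(t)|<|s-t|$ for all $s\neq t$ in $\mathbb R$. Let $\psi_0:\Omega\to\{0,1\}$ be any Borel function and define recursively, for $j\ge0$, $m_j=\int_\Omega(1-\psi_j)f\,dx$, $t_{j+1}=h_2(1-m_j)-h_1(m_j)$, and $\psi_{j+1}(x)=0$ if $\tau(x)<t_{j+1}$, $\psi_{j+1}(x)=1$ otherwise. Then $t_j\to\bar t$ as $j\to\infty$, and $\psi_j\to\bar\psi$ uniformly on every compact subset of $\Omega\setminus\{\tau=\bar t\}$.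
   Context: $\tau(x)=|x-x_1|^p-|x-x_2|^p$, $m(t)=\int_{\{x\in\Omega:\tau(x)<t\}}f\,dx$, $G(t)=h_2(1-m(t))-h_1(m(t))$. Under the hypotheses there is a unique $\bar t\in\mathbb R$ with $G(\bar t)=\bar t$; the (unique) equilibrium is $A_1=\{\tau<\bar t\}$, $A_2=\{\tau>\bar t\}$, and $\bar\psi(x)=0$ if $\tau(x)<\bar t$, $\bar\psi(x)=1$ if $\tau(x)>\bar t$. *)

(* Defs.v *)
(* R^d is modelled as d.-tuple R, which
   carries the product (= Borel) sigma-algebra from mathcomp-analysis; its
   topology is that of 'rV[R]_d, transported along [row_of_tuple]. *)
From HB Require Import structures.
From mathcomp Require Import all_boot all_order all_algebra.
From mathcomp Require Import all_classical all_reals all_analysis.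
Set Implicit Arguments. Unset Strict Implicit. Unset Printing Implicit Defensive.
Import Order.TTheory GRing.Theory Num.Theory.
Import numFieldNormedType.Exports.
Local Open Scope classical_set_scope.
Local Open Scope ring_scope.

Section Defs.
Context {R : realType} {d : nat}.
Local Notation T := (d.-tuple R).

Definition tsub (x y : T) : T := [tuple tnth x i - tnth y i | i < d].

Definition enorm (x : T) : R := Num.sqrt (\sum_(i < d) tnth x i ^+ 2).

Definition row_of_tuple (x : T) : 'rV[R]_d := \row_i tnth x i.

Definition compactRd (K : set T) : Prop := compact (row_of_tuple @` K).

Definition boundedRd (A : set T) : Prop :=
  exists M : R, forall x, A x -> enorm x <= M.

(* Lebesgue measure on the Borel sets of R^d: the measure giving every
   closed box its volume (this determines it uniquely). *)
Definition is_lebesgue_Rd (mu : set T -> \bar R) : Prop :=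
  forall a b : T,
    mu [set x | forall i : 'I_d, tnth a i <= tnth x i <= tnth b i] =
    (\prod_(i < d) Num.max 0 (tnth b i - tnth a i))%:E.

Definition tau (p : R) (x1 x2 x : T) : R :=
  enorm (tsub x x1) `^ p - enorm (tsub x x2) `^ p.

Section Iter.
Variable mu : set T -> \bar R.
Variables (Omega : set T) (f : T -> R) (p : R) (x1 x2 : T) (h1 h2 : R -> R).

Definition mfun (t : R) : R :=
  fine (\int[mu]_(x in Omega `&` [set x | tau p x1 x2 x < t]) (f x)%:E).

Definition Gfun (t : R) : R := h2 (1 - mfun t) - h1 (mfun t).

Definition mass (psi : T -> R) : R :=
  fine (\int[mu]_(x in Omega) ((1 - psi x) * f x)%:E).

Definition next_t (psi : T -> R) : R := h2 (1 - mass psi) - h1 (mass psi).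

Definition step_psi (t : R) : T -> R :=
  fun x => if tau p x1 x2 x < t then 0 else 1.

Fixpoint psi_seq (psi0 : T -> R) (j : nat) : T -> R :=
  match j with
  | 0 => psi0
  | j'.+1 => step_psi (next_t (psi_seq psi0 j'))
  end.

(* t_seq psi0 j = t_{j+1} *)
Definition t_seq (psi0 : T -> R) (j : nat) : R := next_t (psi_seq psi0 j).

End Iter.
End Defs.

(* Main.v *)
Require Import Defs.
From HB Require Import structures.
From mathcomp Require Import all_boot all_order all_algebra.
From mathcomp Require Import all_classical all_reals all_analysis.
From mathcomp Require Import lra.
Import Order.TTheory GRing.Theory Num.Theory.
Import numFieldNormedType.Exports.
Local Open Scope classical_set_scope.
Local Open Scope ring_scope.

Section Abs.
Variables (R : realType) (G : R -> R).
Hypothesis Gc : forall s t, s != t -> `|G s - G t| < `|s - t|.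

Lemma Glip s t : `|G s - G t| <= `|s - t|.
Proof. by have [->|/Gc/ltW//] := eqVneq s t; rewrite !subrr. Qed.

Lemma Gcont : continuous G.
Proof.
move=> x; apply/cvgrPdist_lt => e e0.
have := (cvgrPdist_lt (fun y : R => y) x).1 (@cvg_id _ (nbhs x)) e e0.
move=> /(_ _)H; near=> y; apply: (le_lt_trans (Glip x y)); near: y; exact: H.
Unshelve. all: by end_near.
Qed.

Lemma Gfix lo hi : (forall t, lo <= G t <= hi) ->
  exists tb, G tb = tb /\ (forall t, G t = t -> t = tb).
Proof.
move=> Hb.
have lohi : lo <= hi by have /andP[a b] := Hb 0; exact: le_trans b.
have gc : {within `[lo, hi], continuous (fun t => G t - t)}.
  apply: continuous_subspaceT => x; apply: continuousB; [exact: Gcont|exact: cvg_id].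
have [|c _ Hc] := @IVT R _ lo hi 0 lohi gc.
  have /andP[a _] := Hb lo; have /andP[_ b] := Hb hi.
  rewrite ge_min le_max subr_ge0 a /= andbT; apply/orP; right; by rewrite subr_le0.
have Gcc : G c = c by apply/eqP; rewrite -subr_eq0 Hc.
exists c; split => // t Gt; apply/eqP; apply/negPn/negP => /Gc.
by rewrite Gt Gcc ltxx.
Qed.

Lemma Gcvg tb (u : nat -> R) : G tb = tb -> (forall n, u n.+1 = G (u n)) ->
  u n @[n --> \oo] --> tb.
Proof.
move=> Gtb Hu.
pose D n := `|u n - tb|.
have Dst n : D n.+1 <= D n by rewrite /D Hu -{1}Gtb Glip.
have Dmono m n : (m <= n)%N -> D n <= D m.
  move=> /subnK <-; elim: (n - m)%N => [|k IH]; first by rewrite add0n.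
  by rewrite addSn; apply: le_trans (Dst _) IH.
pose E := [set D n | n in setT].
have E0 : E !=set0 by exists (D 0), 0.
have El : has_lbound E by exists 0 => _ [n _ <-]; exact: normr_ge0.
have hE : has_inf E by split.
have Dr n : inf E <= D n by apply: ge_inf => //; exists n.
have r0 : inf E = 0.
  apply/eqP; rewrite eq_le (lb_le_inf E0) ?andbT; last first.
    by move=> _ [n _ <-]; exact: normr_ge0.
  rewrite leNgt; apply/negP => rpos.
  set r := inf E in rpos Dr.
  have Gd s : s != tb -> `|G s - tb| < `|s - tb| by move=> /Gc; rewrite Gtb.
  have h1 : `|G (tb + r) - tb| < r.
    have := Gd (tb + r); rewrite addrAC subrr add0r (gtr0_norm rpos); apply.
    by rewrite -subr_eq0 addrAC subrr add0r gt_eqF.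
  have h2 : `|G (tb - r) - tb| < r.
    have := Gd (tb - r); rewrite addrAC subrr add0r normrN (gtr0_norm rpos); apply.
    by rewrite -subr_eq0 addrAC subrr add0r oppr_eq0 gt_eqF.
  pose c := r - Num.max `|G (tb + r) - tb| `|G (tb - r) - tb|.
  have c0 : 0 < c by rewrite /c subr_gt0 gt_max h1 h2.
  have [_ [n _ <-] Dn] := inf_adherent (divr_gt0 c0 (ltr0Sn _ 1)) hE.
  have := Dr n.+1; apply/negP; rewrite -ltNge /D Hu.
  have key s : `|G s - tb| <= r - c -> `|u n - s| < c / 2 -> `|G (u n) - tb| < r.
    move=> H1 H2; apply: le_lt_trans (ler_distD (G s) _ _) _.
    have := Glip (u n) s; lra.
  have Dnr := Dr n; rewrite /D in Dn Dnr.
  have [unt|unt] := leP tb (u n).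
    apply: (key (tb + r)); first have : `|G (tb + r) - tb| <= Num.max `|G (tb + r) - tb| `|G (tb - r) - tb| by rewrite le_max lexx.
      rewrite /c; lra.
    move: Dn Dnr; rewrite ger0_norm ?subr_ge0 // => Dn Dnr.
    by rewrite ger0_norm; lra.
  apply: (key (tb - r)); first have : `|G (tb - r) - tb| <= Num.max `|G (tb + r) - tb| `|G (tb - r) - tb| by rewrite le_max lexx orbT.
      rewrite /c; lra.
  move: Dn Dnr; rewrite ltr0_norm ?subr_lt0 // => Dn Dnr.
  by rewrite ler0_norm; lra.
apply/cvgrPdist_lt => e e0.
have [_ [N _ <-] DN] := inf_adherent e0 hE.
exists N => // n /= Nn; rewrite distrC; apply: le_lt_trans (Dmono _ _ Nn) _.
by rewrite -[e]add0r -r0.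
Qed.
End Abs.

Lemma gcont (R : realType) (p : R) : 1 <= p -> continuous (fun a : R => `|a| `^ p).
Proof.
move=> p1 x; have p0 : p != 0 by rewrite gt_eqF //; lra.
have [->|x0] := eqVneq x 0.
  apply/cvgrPdist_lt => e e0; rewrite /= normr0 powR0 //.
  have m0 : 0 < Num.min e 1 by rewrite lt_min e0 ltr01.
  have := (cvgrPdist_lt (fun y : R => y) 0).1 (@cvg_id _ (nbhs 0)) _ m0.
  move=> /(_ _)H; near=> y.
  have : `|0 - y| < Num.min e 1 by near: y; exact: H.
  rewrite sub0r normrN lt_min => /andP[ye y1].
  rewrite sub0r normrN ger0_norm ?powR_ge0 //.
  have [->|y0] := eqVneq y 0; first by rewrite normr0 powR0.
  apply: le_lt_trans ye; apply: ge1r_powR => //.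
  by rewrite normr_gt0 y0 ltW.
apply: (@cvg_trans _ ((fun a : R => expR (p * ln `|a|)) @ x)).
  apply: near_eq_cvg.
  have xp : 0 < `|x| by rewrite normr_gt0.
  have := (cvgrPdist_lt (fun y : R => y) x).1 (@cvg_id _ (nbhs x)) _ xp.
  move=> /(_ _)H; near=> y.
  have : `|x - y| < `|x| by near: y; exact: H.
  move=> hy; rewrite /powR normr_eq0; case: eqP => //= y0.
  by move: hy; rewrite y0 subr0 ltxx.
rewrite /= /powR normr_eq0 (negbTE x0).
apply: (@continuous_comp _ _ _ (fun a : R => p * ln `|a|) expR); last exact: continuous_expR.
apply: (@continuous_comp _ _ _ (fun a : R => ln `|a|) (fun b => p * b)); last first.
  by apply: continuousM; [exact: cvg_cst|exact: cvg_id].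
have HN : {for x, continuous (fun a : R => `|a|)} by exact: norm_continuous.
have HL : {for `|x|, continuous (@ln R)} by apply: continuous_ln; rewrite normr_gt0.
exact: (continuous_comp HN HL).
Unshelve. all: by end_near.
Qed.
Section Sep.
Variables (R : realType) (d : nat) (p : R) (x1 x2 : d.-tuple R).
Hypothesis p1 : 1 <= p.

Definition taur (M : 'rV[R]_d) : R :=
  `|Num.sqrt (\sum_(i < d) (M 0 i - tnth x1 i) ^+ 2)| `^ p -
  `|Num.sqrt (\sum_(i < d) (M 0 i - tnth x2 i) ^+ 2)| `^ p.

Lemma tau_row x : tau p x1 x2 x = taur (row_of_tuple x).
Proof.
rewrite /tau /taur /enorm !ger0_norm ?sqrtr_ge0 //.
congr (_ `^ p - _ `^ p); congr Num.sqrt; apply: eq_bigr => i _;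
  by rewrite /row_of_tuple mxE /tsub tnth_mktuple.
Qed.

Lemma normpart_cont (c : d.-tuple R) :
  continuous (fun M : 'rV[R]_d => `|Num.sqrt (\sum_(i < d) (M 0 i - tnth c i) ^+ 2)| `^ p).
Proof.
move=> M.
apply: (@continuous_comp _ _ _ (fun M : 'rV[R]_d => Num.sqrt (\sum_(i < d) (M 0 i - tnth c i) ^+ 2)) (fun a : R => `|a| `^ p)); last exact: gcont.
apply: (@continuous_comp _ _ _ (fun M : 'rV[R]_d => (\sum_(i < d) (M 0 i - tnth c i) ^+ 2)) Num.sqrt); last exact: sqrt_continuous.
apply: (@continuous_big R 'I_d +%R 0 xpredT add_continuous) => i _ N.
have hb : {for N, continuous (fun M : 'rV[R]_d => M 0 i - tnth c i)}.
  apply: continuousB; [exact: coord_continuous|exact: cst_continuous].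
exact: (continuousM hb hb).
Qed.

Lemma taur_cont : continuous taur.
Proof. by move=> M; exact: (continuousB (normpart_cont x1 M) (normpart_cont x2 M)). Qed.

Lemma sep (K : set (d.-tuple R)) tb : compactRd K ->
  (forall x, K x -> tau p x1 x2 x <> tb) ->
  exists2 e, 0 < e & forall x, K x -> e <= `|tau p x1 x2 x - tb|.
Proof.
move=> cK Kt.
pose C := taur @` (row_of_tuple @` K).
have cC : compact C by apply: continuous_compact => //; apply: continuous_subspaceT; exact: taur_cont.
have clC : closed C by apply: compact_closed => //; exact: Rhausdorff.
have nC : nbhs tb (~` C).
  apply: open_nbhs_nbhs; split; first exact: closed_openC.
  by move=> [_ [x Kx <-]]; rewrite -tau_row; exact: Kt.
have [e e0 He] := (nbhs_ballP _ _).1 nC.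
exists e => // x Kx; rewrite leNgt; apply/negP => H.
apply: (He (tau p x1 x2 x)); last by exists (row_of_tuple x); [exists x|rewrite tau_row].
by rewrite -ball_normE /ball_ /= distrC.
Qed.
End Sep.

Section Int.
Variables (R : realType) (d : nat) (mu : {measure set (d.-tuple R) -> \bar R}).
Variables (Omega : set (d.-tuple R)) (f : d.-tuple R -> R) (p : R) (x1 x2 : d.-tuple R) (h1 h2 : R -> R).
Local Notation M := (mu : set (d.-tuple R) -> \bar R).

Lemma mass_step t : mass M Omega f (step_psi p x1 x2 t) = Defs.mfun M Omega f p x1 x2 t.
Proof.
rewrite /mass /Defs.mfun /integral.
have -> : (fun x => ((1 - step_psi p x1 x2 t x) * f x)%:E) \_ Omega =
    (fun x => (f x)%:E) \_ (Omega `&` [set x | tau p x1 x2 x < t]).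
  apply/funext => x; rewrite /patch in_setI /step_psi.
  have -> : (x \in [set x | tau p x1 x2 x < t]) = (tau p x1 x2 x < t).
    by apply/idP/idP; rewrite inE.
  case: (x \in Omega) => //=.
  by case: ifP => _; rewrite ?subr0 ?mul1r ?subrr ?mul0r.
by [].
Qed.

Lemma t_seqS psi0 j : t_seq M Omega f p x1 x2 h1 h2 psi0 j.+1 =
  Gfun M Omega f p x1 x2 h1 h2 (t_seq M Omega f p x1 x2 h1 h2 psi0 j).
Proof. by rewrite /t_seq /= /next_t /Gfun mass_step. Qed.

Lemma mfun01 t : (forall x, Omega x -> 0 <= f x) ->
  (\int[mu]_(x in Omega) (f x)%:E = 1%:E)%E -> 0 <= Defs.mfun M Omega f p x1 x2 t <= 1.
Proof.
move=> f0 f1; rewrite /Defs.mfun.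
set A := Omega `&` _.
have I0 : (0 <= \int[mu]_(x in A) (f x)%:E)%E.
  by apply: integral_ge0 => x [Ox _]; rewrite lee_fin f0.
have I1 : (\int[mu]_(x in A) (f x)%:E <= 1%:E)%E.
  rewrite -f1 ge0_integralE; last by move=> x [Ox _]; rewrite lee_fin f0.
  rewrite ge0_integralE; last by move=> x Ox; rewrite lee_fin f0.
  apply: ereal_sup_le => _ [h /= hle <-]; exists h => //= x.
  apply: (le_trans (hle x)); rewrite /patch.
  have [xA|xA] := boolP (x \in A).
    have xO : x \in Omega by move: xA; rewrite !inE => -[].
    by rewrite xO.
  by case: ifPn => // /[!inE] Ox; rewrite lee_fin f0.
rewrite fine_ge0 //=.
have : (\int[mu]_(x in A) (f x)%:E)%E \is a fin_num.
  by rewrite ge0_fin_numE // (le_lt_trans I1) ?ltry.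
move=> /fineK H; rewrite -lee_fin H //.
Qed.
End Int.

Lemma cmp_helper (R : realType) (tx tj tb e : R) :
  `|tb - tj| < e -> e <= `|tx - tb| -> (tx < tj) = (tx < tb).
Proof.
rewrite ltr_distlC => /andP[a1 a2].
rewrite ler_normr => /orP[] Hx;
  case: ltP => k1; case: ltP => k2 //; exfalso; lra.
Qed.

Theorem proposition5p1 (R : realType) (d : nat)
  (mu : {measure set (d.-tuple R) -> \bar R})
  (Omega : set (d.-tuple R)) (f : d.-tuple R -> R) (p : R)
  (x1 x2 : d.-tuple R) (h1 h2 : R -> R) (psi0 : d.-tuple R -> R) :
  is_lebesgue_Rd mu ->
  measurable Omega -> boundedRd Omega ->
  measurable_fun Omega f -> (forall x, Omega x -> 0 <= f x) ->
  (\int[mu]_(x in Omega) (f x)%:E = 1%:E)%E ->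
  1 <= p -> Omega x1 -> Omega x2 ->
  {within [set s : R | 0 <= s <= 1], continuous h1} ->
  {within [set s : R | 0 <= s <= 1], continuous h2} ->
  (forall s t : R, 0 <= s -> s <= t -> t <= 1 -> h1 s <= h1 t) ->
  (forall s t : R, 0 <= s -> s <= t -> t <= 1 -> h2 s <= h2 t) ->
  (forall s : R, 0 <= s <= 1 -> 0 <= h1 s) ->
  (forall s : R, 0 <= s <= 1 -> 0 <= h2 s) ->
  (forall s t : R, s != t ->
     `|Gfun mu Omega f p x1 x2 h1 h2 s - Gfun mu Omega f p x1 x2 h1 h2 t|
       < `|s - t|) ->
  measurable_fun Omega psi0 ->
  (forall x, Omega x -> psi0 x = 0 \/ psi0 x = 1) ->
  exists tbar : R,
    [/\ Gfun mu Omega f p x1 x2 h1 h2 tbar = tbar,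
        (forall t : R, Gfun mu Omega f p x1 x2 h1 h2 t = t -> t = tbar),
        t_seq mu Omega f p x1 x2 h1 h2 psi0 j @[j --> \oo] --> tbar &
        forall K : set (d.-tuple R),
          compactRd K ->
          K `<=` Omega `\` [set x | tau p x1 x2 x = tbar] ->
          forall eps : R, 0 < eps -> exists N : nat, forall j : nat, (N <= j)%N ->
            forall x, K x ->
              `|psi_seq mu Omega f p x1 x2 h1 h2 psi0 j x
                - step_psi p x1 x2 tbar x| < eps].

Proof.
move=> leb mO bO mf f0 f1 p1 O1 O2 ch1 ch2 mh1 mh2 h10 h20 Gc mpsi psi01.
set Gf := Gfun mu Omega f p x1 x2 h1 h2.
have Gb t : h2 0 - h1 1 <= Gf t <= h2 1 - h1 0.
  have /andP[m0 m1] := @mfun01 _ _ mu Omega f p x1 x2 t f0 f1.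
  rewrite /Gf /Gfun.
  set m := Defs.mfun _ _ _ _ _ _ t in m0 m1 *.
  have a1 := mh2 0 (1 - m) (lexx 0) ltac:(lra) ltac:(lra).
  have a2 := mh2 (1 - m) 1 ltac:(lra) ltac:(lra) (lexx 1).
  have a3 := mh1 0 m (lexx 0) m0 m1.
  have a4 := mh1 m 1 m0 m1 (lexx 1).
  apply/andP; split; lra.
have [tb [Gtb Guniq]] := @Gfix _ Gf Gc _ _ Gb.
have Hcvg : t_seq mu Omega f p x1 x2 h1 h2 psi0 j @[j --> \oo] --> tb.
  by apply: (@Gcvg _ Gf Gc tb _ Gtb) => n; rewrite t_seqS.
exists tb; split => // K cK HK eps eps0.
have Kt : forall x, K x -> tau p x1 x2 x <> tb by move=> x /HK [].
have [e e0 He] := @sep _ _ p x1 x2 p1 K tb cK Kt.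
have [N _ HN] := (cvgrPdist_lt _ _).1 Hcvg e e0.
exists N.+1 => -[//|j] Nj x Kx.
have Hj := HN j Nj.
have Hx := He x Kx.
rewrite /= -/(t_seq mu Omega f p x1 x2 h1 h2 psi0 j) /step_psi.
set tj := t_seq _ _ _ _ _ _ _ _ _ j in Hj *.
set tx := tau p x1 x2 x in Hx *.
rewrite (@cmp_helper _ _ _ _ _ Hj Hx).
by rewrite subrr normr0.
Qed.
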